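(* Let $n\geqslant 2$ and let $\alpha\in\mathcal{POI}_n$ have rank $n-1$. Then $\alpha\in\mathcal{AO}_n$ if and only if $\mathrm{d}(\alpha)$ and $\mathrm{i}(\alpha)$ have the same parity.
   Context: Let $\Omega_n=\{1<2<\cdots<n\}$. $\mathcal{I}_n$ denotes the symmetric inverse monoid of all partial injective maps (partial permutations) of $\Omega_n$, with maps written on the right and composed left to right. For $\alpha\in\mathcal{I}_n$, $\mathrm{Dom}(\alpha)$ and $\mathrm{Im}(\alpha)$ are its domain and image and its rank is $|\mathrm{Im}(\alpha)|$. $\mathcal{AI}_n$ is the set of all $\alpha\in\mathcal{I}_n$ such that $\alpha=\sigma|_{\mathrm{Dom}(\alpha)}$ for some even permutation $\sigma$ of $\Omega_n$. $\mathcal{POI}_n$ is the set of order-preserving elements of $\mathcal{I}_n$ (i.e. $x\leqslant y$ implies $x\alpha\leqslant y\alpha$ for $x,y\in\mathrm{Dom}(\alpha)$), and $\mathcal{AO}_n=\mathcal{AI}_n\cap\mathcal{POI}_n$. For $\alpha\in\mathcal{I}_n$ of rank $n-1$, $\mathrm{d}(\alpha)$ is the unique element of $\Omega_n\setminus\mathrm{Dom}(\alpha)$ and $\mathrm{i}(\alpha)$ is the unique element of $\Omega_n\setminus\mathrm{Im}(\alpha)$. *)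

(* Defs.v *)
From mathcomp Require Import all_boot all_order all_fingroup.
Set Implicit Arguments. Unset Strict Implicit. Unset Printing Implicit Defensive.

(* Omega_n is modelled by 'I_n, element k standing for k+1; the order is the
   natural one.  A partial map of Omega_n is a finite function
   'I_n -> option 'I_n (None = undefined). *)
Definition partmap (n : nat) := {ffun 'I_n -> option 'I_n}.

Definition Dom n (a : partmap n) : {set 'I_n} := [set x | a x != None].
Definition Im n (a : partmap n) : {set 'I_n} := [set y | [exists x, a x == Some y]].

Definition is_pinj n (a : partmap n) : Prop :=
  forall x y z, a x = Some z -> a y = Some z -> x = y.

Definition prank n (a : partmap n) : nat := #|Im a|.

Definition in_AI n (a : partmap n) : Prop :=
  is_pinj a /\
  exists s : 'S_n, ~~ odd_perm s /\ forall x, x \in Dom a -> a x = Some (s x).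

Definition in_POI n (a : partmap n) : Prop :=
  is_pinj a /\
  forall x y u v, a x = Some u -> a y = Some v -> x <= y -> u <= v.

Definition in_AO n (a : partmap n) : Prop := in_AI a /\ in_POI a.

(* Main.v *)
Require Import Defs.
From mathcomp Require Import all_boot all_order all_fingroup.
From mathcomp Require Import zify.
Set Implicit Arguments. Unset Strict Implicit. Unset Printing Implicit Defensive.

Lemma mono_id n (s : {perm 'I_n}) :
  (forall x y : 'I_n, x < y -> s x < s y) -> s = 1%g.
Proof.
have up : forall f : 'I_n -> 'I_n, (forall x y : 'I_n, x < y -> f x < f y) ->
   forall x : 'I_n, x <= f x.
  move=> f hf; suff H : forall m (x : 'I_n), nat_of_ord x = m -> m <= f x.
    by move=> x; exact: H.
  elim=> [|m IH] x hx; first done.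
  have hm : m < n by have := ltn_ord x; lia.
  have h1 : f (Ordinal hm) < f x by apply: hf; rewrite /= hx.
  have := IH (Ordinal hm) erefl; lia.
move=> hs; apply/permP=> x; rewrite perm1; apply/val_inj/eqP; rewrite eqn_leq.
have hinv : forall u v : 'I_n, u < v -> (s^-1)%g u < (s^-1)%g v.
  move=> u v uv; rewrite ltnNge; apply/negP; rewrite leq_eqVlt => /orP [/eqP e | lt].
    have e' : (s^-1)%g v = (s^-1)%g u by apply: val_inj.
    move/perm_inj: e' => e'; by rewrite e' ltnn in uv.
  have := hs _ _ lt; rewrite !permKV; lia.
have := up _ hinv (s x); rewrite permK => h1.
have h2 := up _ hs x; by apply/andP; split.
Qed.

Definition mono_off n (s : {perm 'I_n}) (d : 'I_n) :=
  forall x y : 'I_n, x != d -> y != d -> x < y -> s x < s y.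

Lemma tpE n (a b x : 'I_n) : tperm a b x = if x == a then b else if x == b then a else x.
Proof. by case: tpermP => [->|->|/eqP/negbTE-> /eqP/negbTE->]; rewrite ?eqxx //; case: eqP => // ->. Qed.

Lemma lemB n (s : {perm 'I_n}) (d : 'I_n) : (d : nat) = n.-1 -> mono_off s d ->
  odd_perm s = odd d (+) odd (s d).
Proof.
move=> hd.
move=> hm0; have [k hk0] : exists k, n.-1 - s d = k by eexists.
elim: k s hk0 hm0 => [|k IH] s hk hm.
  have hsd : (s d : nat) = n.-1 by have := ltn_ord (s d); lia.
  suff -> : s = 1%g by rewrite odd_perm1 perm1 addbb.
  apply: mono_id => x y xy.
  have xd : x != d by apply/eqP=> e; have := ltn_ord y; rewrite e in xy; lia.
  case: (eqVneq y d) => [->|yd]; last exact: hm.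
  rewrite ltn_neqAle; apply/andP; split.
    by rewrite (inj_eq val_inj) (inj_eq perm_inj).
  by have := ltn_ord (s x); lia.
have hj : (s d).+1 < n by have := ltn_ord (s d); lia.
set j' : 'I_n := Ordinal hj.
have jj : s d != j' by rewrite -(inj_eq val_inj) /= neq_ltn ltnSn.
have hmt : mono_off (s * tperm (s d) j')%g d; last first.
  have := IH (s * tperm (s d) j')%g.
  rewrite permM tpE eqxx odd_permM odd_tperm jj => /(_ ltac:(rewrite /=; lia) hmt).
  have -> : odd j' = ~~ odd (s d) by [].
  by case: (odd_perm s); case: (odd d); case: (odd (s d)).
move=> x y xd yd xy; rewrite !permM !tpE.
have hxy := hm x y xd yd xy.
have sxd : s x != s d by rewrite (inj_eq perm_inj).
have syd : s y != s d by rewrite (inj_eq perm_inj).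
rewrite (negbTE sxd) (negbTE syd).
case: eqP => [ex|nx]; case: eqP => [ey|ny] => //.
- by rewrite ex ey in hxy; rewrite ltnn in hxy.
- rewrite ex /= in hxy. have := ltn_ord (s y). move: sxd syd ny. rewrite -!(inj_eq val_inj) /=. 
  move=> _ h2 h3; have h3' : val (s y) != val j' by apply/eqP => e; apply: h3; exact: val_inj.
  rewrite /= in h3'; lia.
- rewrite ey /= in hxy. move: sxd; rewrite -(inj_eq val_inj) /= => h1. lia.
Qed.

Lemma lemA n (s : {perm 'I_n}) (d : 'I_n) : mono_off s d ->
  odd_perm s = odd d (+) odd (s d).
Proof.
move=> hm0; have [k hk0] : exists k, n.-1 - d = k by eexists.
elim: k d s hk0 hm0 => [|k IH] d s hk hm.
  by apply: lemB => //; have := ltn_ord d; lia.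
have hj : d.+1 < n by have := ltn_ord d; lia.
set d' : 'I_n := Ordinal hj.
have dd : d != d' by rewrite -(inj_eq val_inj) /= neq_ltn ltnSn.
have hmt : mono_off (tperm d d' * s)%g d'; last first.
  have := IH d' (tperm d d' * s)%g ltac:(rewrite /=; lia) hmt.
  rewrite permM tpE eq_sym (negbTE dd) eqxx odd_permM odd_tperm dd.
  have -> : odd d' = ~~ odd d by [].
  by case: (odd_perm s); case: (odd d); case: (odd (s d)).
move=> x y xd yd xy; rewrite !permM !tpE (negbTE xd) (negbTE yd).
move: xd yd; rewrite -!(inj_eq val_inj) /= => xd yd.
case: eqP => [ex|nx]; case: eqP => [ey|ny].
- by rewrite ex ey ltnn in xy.
- apply: hm.
  + by rewrite eq_sym.
  + by apply/eqP => e; apply: ny; rewrite e.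
  + rewrite /=; rewrite ex in xy; lia.
- rewrite ey in xy; apply: hm.
  + by apply/eqP => e; apply: nx; rewrite e.
  + by rewrite eq_sym.
  + rewrite /=; lia.
- by apply: hm => //; apply/eqP => e; [apply: nx | apply: ny]; rewrite e.
Qed.
Lemma mono_of n (a : partmap n) (s : {perm 'I_n}) (d : 'I_n) : in_POI a ->
  (forall x, x != d -> a x = Some (s x)) -> mono_off s d.
Proof.
move=> [pinj mono] h x y xd yd xy.
have hx := h x xd; have hy := h y yd.
rewrite ltn_neqAle (mono _ _ _ _ hx hy (ltnW xy)) andbT.
apply/eqP => /val_inj e; rewrite e in hx.
by have := pinj _ _ _ hx hy => exy; rewrite exy ltnn in xy.
Qed.

Theorem proposition1p1 (n : nat) (a : partmap n) (d i : 'I_n) :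
  2 <= n -> in_POI a -> prank a = n.-1 ->
  d \notin Dom a -> i \notin Im a ->
  (in_AO a <-> odd d = odd i).
Proof.
move=> n2 hP hr hd hi.
have pinj := hP.1.
have sD : Dom a \subset [set~ d].
  apply/subsetP => x hx; rewrite !inE; apply/eqP => e; rewrite e in hx.
  by rewrite hx in hd.
have sI : Im a \subset [set~ i].
  apply/subsetP => x hx; rewrite !inE; apply/eqP => e; rewrite e in hx.
  by rewrite hx in hi.
have cD : n.-1 <= #|Dom a|.
  rewrite -hr /prank -(card_imset _ (@Some_inj _)).
  apply: leq_trans (leq_imset_card a (Dom a)).
  apply: subset_leq_card; apply/subsetP => _ /imsetP [y hy ->].
  move: hy; rewrite inE => /existsP [x /eqP hx].
  by rewrite -hx; apply: imset_f; rewrite inE hx.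
have eD : Dom a = [set~ d].
  apply/eqP; rewrite -(subset_leqif_cards sD).2 cardsC1 card_ord.
  have := subset_leq_card sD; rewrite cardsC1 card_ord => h; lia.
have eI : Im a = [set~ i].
  apply/eqP; rewrite -(subset_leqif_cards sI).2 cardsC1 card_ord.
  by rewrite -hr.
have F1 : forall x, x != d -> exists u, a x = Some u.
  move=> x xd; have : x \in Dom a by rewrite eD !inE.
  by rewrite inE; case: (a x) => [u|] // _; exists u.
have F2 : forall u, u != i -> exists x, a x = Some u.
  move=> u ui; have : u \in Im a by rewrite eI !inE.
  by rewrite inE => /existsP [x /eqP hx]; exists x.
have Dd : forall x, (x \in Dom a) = (x != d) by move=> x; rewrite eD !inE.
split.
  move=> [[_ [s [hs hsa]]] _].
  have hsa' : forall x, x != d -> a x = Some (s x) by move=> x xd; apply: hsa; rewrite Dd.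
  have sdi : s d = i.
    apply/eqP; apply/negPn/negP => ne.
    have [x hx] := F2 _ ne.
    case: (eqVneq x d) => [exd|xd].
      by move: hd; rewrite inE -exd hx.
    move: hx; rewrite hsa' // => -[] /perm_inj exd.
    by rewrite exd eqxx in xd.
  have := lemA (mono_of hP hsa'); rewrite sdi (negbTE hs).
  by case: (odd d); case: (odd i).
move=> hpar.
pose f x := if x == d then i else odflt x (a x).
have finj : injective f.
  have key : forall x y, x == d -> y != d -> f x != f y.
    move=> x y xd yd; rewrite /f xd (negbTE yd).
    have [u hu] := F1 _ yd; rewrite hu /=.
    apply/eqP => eiu; move: hi; rewrite inE; apply/negP/negPn.
    by apply/existsP; exists y; rewrite hu eiu.
  move=> x y; case: (eqVneq x d) => [xd|xd]; case: (eqVneq y d) => [yd|yd].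
  - by rewrite xd yd.
  - by move=> e; have := key x y (introT eqP xd) yd; rewrite e eqxx.
  - by move=> e; have := key y x (introT eqP yd) xd; rewrite e eqxx.
  - rewrite /f (negbTE xd) (negbTE yd).
    have [u hu] := F1 _ xd; have [v hv] := F1 _ yd.
    rewrite hu hv /= => euv; rewrite euv in hu; exact: pinj _ _ _ hu hv.
pose s := perm finj.
have hsa : forall x, x != d -> a x = Some (s x).
  move=> x xd; rewrite permE /f (negbTE xd).
  by have [u hu] := F1 _ xd; rewrite hu.
have sdi : s d = i by rewrite permE /f eqxx.
split; last exact: hP.
split; first exact: pinj.
exists s; split; last by move=> x; rewrite Dd; exact: hsa.
rewrite (lemA (mono_of hP hsa)) sdi hpar.
by case: (odd i).
Qed.
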